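(* An oriented Burling graph has no directed cycle.
   Context: Oriented graphs are finite, without loops, multiple arcs or pairs of opposite arcs. In a rooted tree $T$ with root $r$, each non-root vertex $v$ has a parent $p(v)$; children, leaves, ancestors and descendants are as usual. A branch is a sequence $v_1\dots v_k$ ($k\ge0$) with $v_i$ the parent of $v_{i+1}$; it starts at $v_1$. A Burling tree is a 4-tuple $(T,r,\ell,c)$: $T$ a rooted tree with root $r$; $\ell$ assigns to each non-leaf vertex $v$ one of its children $\ell(v)$ (the last-born of $v$); $c$ assigns to every vertex $v$ that is neither the root nor a last-born the vertex-set of a (possibly empty) branch starting at $\ell(p(v))$, and $c(v)=\emptyset$ if $v$ is the root or a last-born. The oriented graph fully derived from it has vertex-set $V(T)$ and an arc $uv$ iff $v\in c(u)$; an oriented graph is derived from the Burling tree if it is an induced subgraph of the fully derived one. An oriented Burling graph is an oriented graph derived from some Burling tree. *)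

(* Defs.v *)
From mathcomp Require Import all_boot.
Set Implicit Arguments. Unset Strict Implicit. Unset Printing Implicit Defensive.

Section BurlingDefs.
Variable V : finType.

Definition step (par : V -> option V) (v : V) : V := odflt v (par v).

Definition is_rooted_tree (r : V) (par : V -> option V) : Prop :=
  par r = None /\
  (forall v, v != r -> par v <> None) /\
  (forall v, exists n, iter n (step par) v = r).

Definition is_child (par : V -> option V) (u v : V) : bool := par u == Some v.

Definition is_leaf (par : V -> option V) (v : V) : bool :=
  [forall u, ~~ is_child par u v].

(* a branch v_1 ... v_k with v_i the parent of v_{i+1} *)
Definition is_branch (par : V -> option V) (s : seq V) : bool :=
  if s is x :: t then path (fun a b => is_child par b a) x t else true.

Definition is_last_born (par : V -> option V) (lb : V -> V) (v : V) : Prop :=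
  exists w, par v = Some w /\ lb w = v.

(* (T, r, lb, c) is a Burling tree. lb is only meaningful on non-leaves. *)
Definition is_burling_tree (r : V) (par : V -> option V) (lb : V -> V)
    (c : V -> {set V}) : Prop :=
  is_rooted_tree r par /\
  (forall v, ~~ is_leaf par v -> is_child par (lb v) v) /\
  (forall v, (v = r \/ is_last_born par lb v) -> c v = set0) /\
  (forall v w, par v = Some w -> ~ is_last_born par lb v ->
     exists s : seq V, [/\ is_branch par s,
                          (if s is x :: _ then x = lb w else True) &
                          c v = [set x in s]]).

Definition fully_derived_arc (c : V -> {set V}) : rel V := fun u v => v \in c u.

End BurlingDefs.

Definition is_oriented_graph (W : finType) (arc : rel W) : Prop :=
  (forall x, ~~ arc x x) /\ (forall x y, arc x y -> ~~ arc y x).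

(* (W, arc) is derived from the Burling tree (V, r, par, lb, c): it is an
   induced subgraph of the fully derived graph, i.e. isomorphic to one via
   an injective vertex map preserving arcs and non-arcs. *)
Definition derived_from (W : finType) (arc : rel W) (V : finType)
    (c : V -> {set V}) : Prop :=
  exists f : W -> V, injective f /\
    forall x y, arc x y = fully_derived_arc c (f x) (f y).

Definition is_oriented_burling_graph (W : finType) (arc : rel W) : Prop :=
  is_oriented_graph arc /\
  exists (V : finType) (r : V) (par : V -> option V) (lb : V -> V)
         (c : V -> {set V}),
    is_burling_tree r par lb c /\ derived_from arc c.

Definition has_directed_cycle (W : finType) (arc : rel W) : Prop :=
  exists s : seq W, [/\ s != [::], uniq s & cycle arc s].

(* Main.v *)
Require Import Defs.
From mathcomp Require Import all_boot.
Set Implicit Arguments. Unset Strict Implicit. Unset Printing Implicit Defensive.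

Section Aux.
Variables (V : finType) (r : V) (par : V -> option V).

Definition anc (a x : V) := exists n, iter n (step par) x = a.

Definition prec (lb : V -> V) (v u : V) :=
  exists w a b, par a = Some w /\ par b = Some w /\ b = lb w /\ a <> b /\
                    anc a u /\ anc b v.

Lemma anc_refl x : anc x x. Proof. by exists 0. Qed.

Lemma anc_trans a b x : anc a b -> anc b x -> anc a x.
Proof. move=> [n Hn] [m Hm]; exists (n + m); by rewrite iterD Hm. Qed.

Lemma step_par a w : par a = Some w -> step par a = w.
Proof. by rewrite /step => ->. Qed.

Lemma chain a b x : anc a x -> anc b x ->
  (exists k, iter k (step par) b = a) \/ (exists k, iter k (step par) a = b).
Proof.
move=> [n Hn] [m Hm]; case: (leqP m n) => H.
- left; exists (n - m); by rewrite -Hm -iterD subnK.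
- right; exists (m - n); rewrite -Hn -iterD subnK //; exact: ltnW.
Qed.

Lemma iter_root n : par r = None -> iter n (step par) r = r.
Proof. move=> Hr; elim: n => //= n ->; by rewrite /step Hr. Qed.

Lemma cyc_root w k : is_rooted_tree r par -> iter k.+1 (step par) w = w -> w = r.
Proof.
move=> [Hr [_ Hall]] Hc.
have Hj : forall j, iter (k.+1 * j) (step par) w = w.
  elim=> [|j IH]; first by rewrite muln0.
  by rewrite mulnS iterD IH Hc.
have [N HN] := Hall w.
rewrite -(Hj N) -(subnK (leq_pmull N (ltn0Sn k))) iterD HN iter_root //.
Qed.

Lemma sib_anc a b w x : is_rooted_tree r par ->
  par a = Some w -> par b = Some w -> anc a x -> anc b x -> a = b.
Proof.
move=> Ht Ha Hb Hax Hbx.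
have gen : forall a b, par a = Some w -> par b = Some w ->
    (exists k, iter k (step par) b = a) -> a = b.
  move=> a' b' Ha' Hb' [[|k] Hk] //.
  move: Hk; rewrite iterSr (step_par Hb') => Hk.
  have Hw : iter k.+1 (step par) w = w by rewrite iterS Hk (step_par Ha').
  have Hwr := cyc_root Ht Hw.
  move: Hk; rewrite Hwr iter_root; last by case: Ht.
  move=> Hra; move: Ha'; rewrite -Hra; case: Ht => -> //.
case: (chain Hax Hbx) => H; first exact: gen.
symmetry; exact: gen.
Qed.

Lemma prec_irr lb u : is_rooted_tree r par -> ~ prec lb u u.
Proof.
move=> Ht [w [a [b [Ha [Hb [_ [Hab [Hau Hbu]]]]]]]].
by apply: Hab; apply: (sib_anc Ht Ha Hb Hau Hbu).
Qed.

Lemma prec_trans lb z v u : is_rooted_tree r par ->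
  prec lb z v -> prec lb v u -> prec lb z u.
Proof.
move=> Ht [w' [a' [b' [Ha' [Hb' [Elb' [Hab' [Ha'v Hb'z]]]]]]]]
          [w [a [b [Ha [Hb [Elb [Hab [Hau Hbv]]]]]]]].
case: (chain Ha'v Hbv) => [[[|k] Hk]|[[|k] Hk]].
- exfalso; apply: Hab'; move: Hk => /= Hk; subst a'.
  move: Ha'; rewrite Hb => -[Eww]; subst w'; by rewrite Elb'.
- (* a' strict ancestor of b *)
  exists w', a', b'; do 4 (split; first by []); split; last by [].
  apply: anc_trans Hau; exists k.+1.
  by rewrite iterSr (step_par Ha) -(step_par Hb) -iterSr.
- exfalso; apply: Hab'; move: Hk => /= Hk; subst a'.
  move: Ha'; rewrite Hb => -[Eww]; subst w'; by rewrite Elb'.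
- (* b strict ancestor of a' *)
  exists w, a, b; do 5 (split; first by []).
  apply: anc_trans Hb'z; exists k.+1.
  by rewrite iterSr (step_par Hb') -(step_par Ha') -iterSr.
Qed.

Lemma branch_anc x t : path (fun a b => is_child par b a) x t ->
  forall v, v \in x :: t -> anc x v.
Proof.
elim: t x => [|y t IH] x /=.
  by move=> _ v; rewrite inE => /eqP ->; apply: anc_refl.
move=> /andP [/eqP Hy Hp] v; rewrite inE => /orP [/eqP ->|Hv].
  exact: anc_refl.
apply: anc_trans (IH _ Hp _ Hv); exists 1 => /=; exact: step_par.
Qed.

Lemma arc_prec lb c u v : is_burling_tree r par lb c ->
  v \in c u -> prec lb v u.
Proof.
move=> [Ht [Hlb [Hc0 Hc]]] Hv.
have Hur : u <> r by move=> E; move: Hv; rewrite Hc0 ?inE //; left.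
have Hnlb : ~ is_last_born par lb u
  by move=> H; move: Hv; rewrite Hc0 ?inE //; right.
case Epu : (par u) => [w|]; last first.
  have Hne : u != r by apply/eqP.
  by case: Ht => _ [H _]; case: (H u Hne).
have [s [Hs Hhd Hcs]] := Hc u w Epu Hnlb.
move: Hv; rewrite Hcs inE; case: s Hs Hhd {Hcs} => [|x t] //= Hs Hx Hv.
subst x.
have Hlbw : is_child par (lb w) w.
  apply: Hlb; apply/negP => /forallP /(_ u); by rewrite /is_child Epu eqxx.
exists w, u, (lb w); split; first by [].
split; first exact/eqP.
split; first by [].
split; first by move=> E; apply: Hnlb; exists w.
split; first exact: anc_refl.
exact: (branch_anc Hs).
Qed.
End Aux.

Lemma path_prec (W V : finType) (arc : rel W) (R : V -> V -> Prop) (f : W -> V) :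
  (forall a b c, R a b -> R b c -> R a c) ->
  (forall x y, arc x y -> R (f y) (f x)) ->
  forall s x, s <> [::] -> path arc x s -> R (f (last x s)) (f x).
Proof.
move=> Htr Harc; elim=> [|y s IH] x // _ /= /andP [Hxy Hp].
case: s IH Hp => [|z s] IH Hp; first exact: Harc.
apply: Htr (Harc _ _ Hxy); exact: IH.
Qed.

Theorem lemma3p2 (W : finType) (arc : rel W) :
  is_oriented_burling_graph arc -> ~ has_directed_cycle arc.
Proof.
move=> [_ [V [r [par [lb [c [Hbt [f [_ Hf]]]]]]]]] [[|x s] [_ _ Hcy]] //.
have Ht : is_rooted_tree r par by case: Hbt.
apply: (prec_irr (lb := lb) (u := f x) Ht).
move: Hcy; rewrite /cycle => Hp.
have Htr : forall a b d, prec par lb a b -> prec par lb b d -> prec par lb a d.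
  move=> a b d Hab Hbd; exact: prec_trans Ht Hab Hbd.
have Harc : forall y z, arc y z -> prec par lb (f z) (f y).
  move=> y z Hyz; apply: arc_prec Hbt _; by move: Hyz; rewrite Hf.
have Hne : rcons s x <> [::] by case: s {Hp}.
have := @path_prec W V arc (prec par lb) f Htr Harc (rcons s x) x Hne Hp.
by rewrite last_rcons.
Qed.
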